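(* Consider a block-fading channel with channel power gain $h(\nu)\ge0$ (a random variable with continuous pdf) at fading state $\nu$, constant transmit power $P>0$, and noise power $\sigma^2>0$. For a target $0\le\bar Q\le E_\nu[h(\nu)P]$, let Problem (P1) be: maximize over $\{\alpha(\nu)\}$ the quantity $E_\nu\big[\log\big(1+\frac{\alpha(\nu)h(\nu)P}{\sigma^2}\big)\big]$ subject to $E_\nu[(1-\alpha(\nu))h(\nu)P]\ge\bar Q$ and $0\le\alpha(\nu)\le1$ for all $\nu$. Let $\lambda^\ast\ge0$ be the optimal dual solution of (P1), i.e. a minimizer over $\lambda\ge0$ of the dual function $g(\lambda)=\max_{0\le\alpha(\nu)\le1}\big\{E_\nu[\log(1+\alpha(\nu)h(\nu)P/\sigma^2)]+\lambda\big(E_\nu[(1-\alpha(\nu))h(\nu)P]-\bar Q\big)\big\}$. Then the optimal solution of (P1) is $\alpha^\ast(\nu)=\frac{1}{\lambda^\ast h(\nu)P}-\frac{\sigma^2}{h(\nu)P}$ if $h(\nu)\ge\frac{1}{\lambda^\ast P}-\frac{\sigma^2}{P}$, and $\alpha^\ast(\nu)=1$ otherwise.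
   Context: $\log$ is the natural logarithm. $\alpha(\nu)$ is the fraction of the received power at fading state $\nu$ split to the information decoder; $1-\alpha(\nu)$ is split to the energy harvester. *)

(* Defs.v *)
From HB Require Import structures.
From mathcomp Require Import all_boot all_order all_algebra.
From mathcomp Require Import all_classical all_reals all_analysis.
Set Implicit Arguments. Unset Strict Implicit. Unset Printing Implicit Defensive.
Import Order.TTheory GRing.Theory Num.Theory.
Local Open Scope classical_set_scope.
Local Open Scope ring_scope.

(* Fading states nu range over a probability space (T, Pr); h : T -> R is the
   channel power gain, Pt > 0 the transmit power, s2 > 0 the noise power
   sigma^2, Qbar the harvesting target. *)

Definition box_feasible {d} {T : measurableType d} {R : realType}
  (a : T -> R) : Prop :=
  measurable_fun setT a /\ (forall x, 0 <= a x <= 1).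

Definition rate_obj {d} {T : measurableType d} {R : realType}
  (Pr : probability T R) (h : T -> R) (Pt s2 : R) (a : T -> R) : \bar R :=
  (\int[Pr]_x (ln (1 + a x * h x * Pt / s2))%:E)%E.

Definition harvest {d} {T : measurableType d} {R : realType}
  (Pr : probability T R) (h : T -> R) (Pt : R) (a : T -> R) : \bar R :=
  (\int[Pr]_x ((1 - a x) * h x * Pt)%:E)%E.

Definition lagrangian {d} {T : measurableType d} {R : realType}
  (Pr : probability T R) (h : T -> R) (Pt s2 Qbar lam : R) (a : T -> R)
  : \bar R :=
  (rate_obj Pr h Pt s2 a + lam%:E * (harvest Pr h Pt a - Qbar%:E))%E.

Definition dual_fun {d} {T : measurableType d} {R : realType}
  (Pr : probability T R) (h : T -> R) (Pt s2 Qbar lam : R) : \bar R :=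
  ereal_sup [set lagrangian Pr h Pt s2 Qbar lam a | a in @box_feasible d T R].

Definition dual_optimal {d} {T : measurableType d} {R : realType}
  (Pr : probability T R) (h : T -> R) (Pt s2 Qbar lam : R) : Prop :=
  0 <= lam /\
  (forall l, 0 <= l -> (dual_fun Pr h Pt s2 Qbar lam <= dual_fun Pr h Pt s2 Qbar l)%E).

Definition P1_feasible {d} {T : measurableType d} {R : realType}
  (Pr : probability T R) (h : T -> R) (Pt Qbar : R) (a : T -> R) : Prop :=
  box_feasible a /\ (Qbar%:E <= harvest Pr h Pt a)%E.

Definition P1_optimal {d} {T : measurableType d} {R : realType}
  (Pr : probability T R) (h : T -> R) (Pt s2 Qbar : R) (a : T -> R) : Prop :=
  P1_feasible Pr h Pt Qbar a /\
  (forall b, P1_feasible Pr h Pt Qbar b ->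
     (rate_obj Pr h Pt s2 b <= rate_obj Pr h Pt s2 a)%E).

(* The claimed optimal policy. For lam = 0 the threshold
   1/(lam P) - sigma^2/P is +infinity, so the condition never holds and
   alpha = 1; this is made explicit (Rocq would otherwise read 1/0 as 0). *)
Definition alpha_star {T} {R : realType} (h : T -> R) (Pt s2 lam : R)
  (x : T) : R :=
  if lam == 0 then 1
  else if 1 / (lam * Pt) - s2 / Pt <= h x
       then 1 / (lam * h x * Pt) - s2 / (h x * Pt)
       else 1.

(* Main.v *)
Require Import Defs.
Set Warnings "-all".
From HB Require Import structures.
From mathcomp Require Import all_boot all_order all_algebra.
From mathcomp Require Import all_classical all_reals all_analysis.
From mathcomp Require Import measurable_realfun.
From mathcomp.algebra_tactics Require Import ring lra.
Import Order.TTheory GRing.Theory Num.Theory.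
Local Open Scope ring_scope.

Section Pt.
Context {R : realType}.
Variables (Pt s2 : R).
Hypotheses (Pt_gt0 : 0 < Pt) (s2_gt0 : 0 < s2).

Definition AA (l r : R) : R := alpha_star (fun r : R => r) Pt s2 l r.

Lemma AA_pos {l r : R} : 0 < l ->
  AA l r = if (l^-1 - s2) / Pt <= r then (l^-1 - s2) / (r * Pt) else 1.
Proof.
move=> l0; rewrite /AA /alpha_star gt_eqF //.
have -> : 1 / (l * Pt) - s2 / Pt = (l^-1 - s2) / Pt.
  by rewrite div1r invfM; ring.
by rewrite div1r !invfM; congr (if _ then _ else _); ring.
Qed.

Lemma AA_min {l r : R} : 0 < l -> l * s2 <= 1 -> 0 <= r ->
  r * Pt * AA l r = Num.min (r * Pt) (l^-1 - s2).
Proof.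
move=> l0 ls r0; rewrite AA_pos //.
have k0 : 0 <= l^-1 - s2.
  rewrite subr_ge0 -(ler_pM2l l0) mulfV ?gt_eqF //.
case: ifPn => hr.
- rewrite ler_pdivrMr // in hr.
  have [rz|rpos] := eqVneq r 0.
    rewrite rz mul0r in hr *; have -> : l^-1 - s2 = 0 by lra.
    by rewrite !mul0r /Num.min ltxx.
  rewrite mulrC mulfVK; last by rewrite mulf_neq0 // gt_eqF.
  by rewrite /Num.min ltNge hr.
- rewrite -ltNge ltr_pdivlMr // in hr.
  by rewrite mulr1 /Num.min hr.
Qed.

Lemma AA0 r : AA 0 r = 1.
Proof. by rewrite /AA /alpha_star eqxx. Qed.

Lemma AA01 {l r : R} : 0 <= l -> l * s2 <= 1 -> 0 <= r -> 0 <= AA l r <= 1.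
Proof.
move=> l0 ls r0; have [->|lpos] := eqVneq l 0; first by rewrite AA0 ler01 lexx.
have {}l0 : 0 < l by rewrite lt_def lpos.
have k0 : 0 <= l^-1 - s2.
  rewrite subr_ge0 -(ler_pM2l l0) mulfV ?gt_eqF //.
rewrite AA_pos //; case: ifPn => hr; last by rewrite ler01 lexx.
rewrite ler_pdivrMr // in hr.
have [rz|rpos] := eqVneq r 0; first by rewrite rz mul0r invr0 mulr0 ler01 lexx.
have u0 : 0 < r * Pt by rewrite mulr_gt0 // lt_def rpos.
by rewrite divr_ge0 ?(ltW u0) //= ler_pdivrMr // mul1r.
Qed.

Lemma ln_conc {y0 y : R} : 0 < y0 -> 0 < y -> ln y <= ln y0 + (y - y0) / y0.
Proof.
move=> y00 y0'.
have h1 : -1 < y / y0 - 1.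
  have : 0 < y / y0 by rewrite divr_gt0.
  lra.
have := le_ln1Dx h1.
have -> : 1 + (y / y0 - 1) = y / y0 by ring.
rewrite ln_div ?posrE //.
have -> : (y - y0) / y0 = y / y0 - 1 by rewrite mulrBl mulfV ?gt_eqF.
lra.
Qed.

Lemma AA_max (l r b : R) : 0 <= l -> l * s2 <= 1 -> 0 <= r -> 0 <= b <= 1 ->
  ln (1 + b * r * Pt / s2) + l * ((1 - b) * r * Pt) <=
  ln (1 + AA l r * r * Pt / s2) + l * ((1 - AA l r) * r * Pt).
Proof.
move=> l0 ls r0 /andP[b0 b1].
have /andP[a0 a1] := AA01 l0 ls r0.
set a := AA l r.
have u0 : 0 <= r * Pt by rewrite mulr_ge0 // ltW.
set u := r * Pt in u0.
have -> : b * r * Pt / s2 = b * u / s2 by rewrite /u mulrA.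
have -> : a * r * Pt / s2 = a * u / s2 by rewrite /u mulrA.
have -> : (1 - b) * r * Pt = (1 - b) * u by rewrite /u mulrA.
have -> : (1 - a) * r * Pt = (1 - a) * u by rewrite /u mulrA.
have y00 : 0 < 1 + a * u / s2 by rewrite ltr_wpDr // divr_ge0 // ?mulr_ge0 // ltW.
have y0' : 0 < 1 + b * u / s2 by rewrite ltr_wpDr // divr_ge0 // ?mulr_ge0 // ltW.
have := ln_conc y00 y0'.
have -> : (1 + b * u / s2 - (1 + a * u / s2)) / (1 + a * u / s2) =
          ((b - a) * u) / (s2 + a * u).
  have hs : s2 != 0 by rewrite gt_eqF.
  have hq : s2 + a * u != 0.
    by rewrite gt_eqF // ltr_wpDr // mulr_ge0.
  field.
  by rewrite hq hs.
move=> H.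
suff : (b - a) * u / (s2 + a * u) <= l * ((b - a) * u) by lra.
have [lz|lpos] := eqVneq l 0.
  rewrite lz mul0r /a lz AA0.
  apply: mulr_le0_ge0; first by rewrite mulr_le0_ge0 // subr_le0.
  by rewrite invr_ge0 addr_ge0 // ?mul1r // ltW.
have {}l0 : 0 < l by rewrite lt_def lpos.
have hm := AA_min l0 ls r0; rewrite -/a -/u mulrC in hm.
have [ku|uk] := leP (l^-1 - s2) u.
  rewrite hm /Num.min ltNge ku /=.
  have -> : s2 + (l^-1 - s2) = l^-1 by ring.
  by rewrite invrK mulrC.
rewrite hm /Num.min uk.
have hx : (b - a) * u <= 0.
  have -> : (b - a) * u = b * u - a * u by ring.
  rewrite hm /Num.min uk subr_le0 -{2}(mul1r u).
  by rewrite ler_wpM2r.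
rewrite [X in _ <= X]mulrC; apply: ler_wnM2l => //.
have sp : 0 < s2 + u by rewrite ltr_wpDr.
rewrite -(ler_pM2r sp) mulVf ?gt_eqF //.
have : l * (s2 + u) < l * l^-1 by rewrite ltr_pM2l //; lra.
rewrite mulfV ?lt0r_neq0 //; lra.
Qed.



Lemma AA_noninc (l : R) : 0 <= l -> l * s2 <= 1 ->
  forall x y, x <= y -> AA l y <= AA l x.
Proof.
move=> l0 ls x y xy.
have [->|lpos] := eqVneq l 0; first by rewrite !AA0.
have {}l0 : 0 < l by rewrite lt_def lpos.
have k0 : 0 <= l^-1 - s2.
  rewrite subr_ge0 -(ler_pM2l l0) mulfV ?gt_eqF //.
rewrite !AA_pos //; set k := l^-1 - s2 in k0 *.
have [kz|kpos] := eqVneq k 0.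
  rewrite kz !mul0r; case: ifPn => hy; case: ifPn => hx //; rewrite ?ler01 //.
  rewrite -ltNge in hy; lra.
have {}k0 : 0 < k by rewrite lt_def kpos.
have kP : 0 < k / Pt by rewrite divr_gt0.
case: ifPn => hy; case: ifPn => hx.
- have x0 : 0 < x * Pt by rewrite mulr_gt0 // (lt_le_trans kP).
  have y0 : 0 < y * Pt by rewrite mulr_gt0 // (lt_le_trans kP).
  apply: ler_wpM2l; first exact: ltW.
  by rewrite lef_pV2 ?posrE // ler_pM2r.
- have y0 : 0 < y * Pt by rewrite mulr_gt0 // (lt_le_trans kP).
  rewrite ler_pdivrMr // mul1r.
  by rewrite ler_pdivrMr // in hy.
- rewrite -ltNge in hy; have := le_lt_trans (le_trans hx xy) hy.
  by rewrite ltxx.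
- by [].
Qed.

Lemma AA_lip (l1 l2 r : R) : 0 < l1 -> l1 <= l2 -> l2 * s2 <= 1 -> 0 <= r ->
  0 <= r * Pt * AA l1 r - r * Pt * AA l2 r <= l1^-1 - l2^-1.
Proof.
move=> l10 l12 ls r0.
have l20 : 0 < l2 by apply: lt_le_trans l12.
have ls1 : l1 * s2 <= 1.
  by apply: le_trans ls; rewrite ler_pM2r.
rewrite !AA_min //.
have : l2^-1 <= l1^-1 by rewrite lef_pV2 ?posrE.
rewrite /Num.min; case: ifPn => h1; case: ifPn => h2; lra.
Qed.

End Pt.
Section Int.
Context {d : measure_display} {T : measurableType d} {R : realType}.
Variables (Pr : probability T R) (h : T -> R) (Pt s2 : R).
Hypotheses (h_meas : measurable_fun setT h) (h_ge0 : forall x, 0 <= h x)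
  (h_int : Pr.-integrable setT (fun x => (h x)%:E))
  (Pt_gt0 : 0 < Pt) (s2_gt0 : 0 < s2).

Definition RI (f : T -> R) : R := fine (\int[Pr]_x (f x)%:E)%E.

Lemma dom_int (g : T -> R) (c : R) : measurable_fun setT g ->
  (forall x, `|g x| <= c * h x) -> Pr.-integrable setT (fun x => (g x)%:E).
Proof.
move=> mg hg.
apply: (le_integrable _ _ (g := fun x => (c%:E * (h x)%:E)%E)) => //.
- by apply/measurable_realfun.measurable_EFinP.
- move=> x _; rewrite -EFinM !abse_EFin lee_fin.
  exact: (le_trans (hg x) (ler_norm _)).
- exact: integrableZl.
Qed.

Lemma RIE (g : T -> R) : Pr.-integrable setT (fun x => (g x)%:E) ->
  (\int[Pr]_x (g x)%:E)%E = (RI g)%:E.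
Proof. by move=> gi; rewrite /RI fineK // integrable_fin_num. Qed.

Lemma RI_le (f g : T -> R) : Pr.-integrable setT (fun x => (f x)%:E) ->
  Pr.-integrable setT (fun x => (g x)%:E) -> (forall x, f x <= g x) ->
  RI f <= RI g.
Proof.
move=> fi gi fg; rewrite -lee_fin -!RIE //.
by apply: le_integral => // x _; rewrite lee_fin.
Qed.

Lemma RI_D (f g : T -> R) : Pr.-integrable setT (fun x => (f x)%:E) ->
  Pr.-integrable setT (fun x => (g x)%:E) ->
  RI (fun x => f x + g x) = RI f + RI g.
Proof.
move=> fi gi; apply: EFin_inj; rewrite EFinD -!RIE //.
- under eq_integral do rewrite EFinD.
  exact: integralD.
- under eq_fun do rewrite EFinD.
  exact: integrableD.
Qed.

Lemma RI_Z (f : T -> R) (c : R) : Pr.-integrable setT (fun x => (f x)%:E) ->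
  RI (fun x => c * f x) = c * RI f.
Proof.
move=> fi; apply: EFin_inj; rewrite EFinM -!RIE //.
- under eq_integral do rewrite EFinM.
  exact: integralZl.
- under eq_fun do rewrite EFinM.
  exact: integrableZl.
Qed.

Lemma RI_cst (c : R) : RI (fun _ => c) = c.
Proof.
rewrite /RI integral_cst //.
have P1 : (Pr setT = 1)%E := probability_setT Pr.
by move: P1 => /= ->; rewrite mule1.
Qed.

Lemma int_cst (c : R) : Pr.-integrable setT (fun _ => c%:E).
Proof. exact: (finite_measure_integrable_cst Pr c). Qed.

End Int.

Section Main.
Context {d : measure_display} {T : measurableType d} {R : realType}.
Variables (Pr : probability T R) (h : T -> R) (Pt s2 Qbar : R).
Hypotheses (h_meas : measurable_fun setT h) (h_ge0 : forall x, 0 <= h x)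
  (h_int : Pr.-integrable setT (fun x => (h x)%:E))
  (Pt_gt0 : 0 < Pt) (s2_gt0 : 0 < s2).

Let al l := alpha_star h Pt s2 l.
Let lnf (a : T -> R) := fun x => ln (1 + a x * h x * Pt / s2).
Let hvf (a : T -> R) := fun x => (1 - a x) * h x * Pt.
Let ra a := RI Pr (lnf a).
Let ha a := RI Pr (hvf a).

Lemma al_AA l x : al l x = AA Pt s2 l (h x).
Proof. by []. Qed.

Lemma meas_al {l} : 0 <= l -> l * s2 <= 1 -> measurable_fun setT (al l).
Proof.
move=> l0 ls.
have -> : al l = AA Pt s2 l \o h by [].
apply: measurableT_comp => //.
apply: measurable_realfun.nonincreasing_measurable => //.
by move=> x y xy; exact: AA_noninc.
Qed.

Lemma box_al {l} : 0 <= l -> l * s2 <= 1 -> box_feasible (al l).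
Proof.
move=> l0 ls; split; first exact: meas_al.
move=> x; rewrite al_AA; exact: AA01.
Qed.

Lemma int_ln a : box_feasible a -> Pr.-integrable setT (fun x => (lnf a x)%:E).
Proof.
move=> [ma a01].
apply: (dom_int Pr h h_int _ (Pt / s2)) => //.
- rewrite /lnf; apply: measurableT_comp; first exact: measurable_realfun.measurable_ln.
  apply: measurable_realfun.measurable_funD; first exact: measurable_cst.
  apply: measurable_realfun.measurable_funM; last exact: measurable_cst.
  apply: measurable_realfun.measurable_funM; last exact: measurable_cst.
  exact: measurable_realfun.measurable_funM.
- move=> x; rewrite /lnf.
  have /andP[a0 a1] := a01 x.
  have t0 : 0 <= a x * h x * Pt / s2.
    by rewrite divr_ge0 ?mulr_ge0 // ltW.
  rewrite ger0_norm; last by rewrite ln_ge0 // lerDl.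
  apply: le_trans (le_ln1Dx _) _; first by lra.
  have hp : 0 <= h x * Pt by rewrite mulr_ge0 // ltW.
  have e1 : a x * h x * Pt <= h x * Pt.
    by rewrite -mulrA -[X in _ <= X](mul1r (h x * Pt)); apply: ler_wpM2r.
  rewrite [X in _ <= X]mulrC mulrA.
  by apply: ler_wpM2r => //; rewrite invr_ge0 ltW.
Qed.

Lemma int_hv a : box_feasible a -> Pr.-integrable setT (fun x => (hvf a x)%:E).
Proof.
move=> [ma a01].
apply: (dom_int Pr h h_int _ Pt) => //.
- rewrite /hvf; apply: measurable_realfun.measurable_funM; last exact: measurable_cst.
  apply: measurable_realfun.measurable_funM => //.
  apply: measurable_realfun.measurable_funB => //; exact: measurable_cst.
- move=> x; rewrite /hvf.
  have /andP[a0 a1] := a01 x.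
  have hp : 0 <= h x * Pt by rewrite mulr_ge0 // ltW.
  rewrite -mulrA ger0_norm; last by rewrite mulr_ge0 // subr_ge0.
  rewrite [X in _ <= X]mulrC -[X in _ <= X]mul1r.
  rewrite ler_wpM2r //; lra.
Qed.


Lemma rate_E a : box_feasible a -> rate_obj Pr h Pt s2 a = (ra a)%:E.
Proof. by move=> ba; rewrite /rate_obj (RIE Pr) //; exact: int_ln. Qed.

Lemma harv_E a : box_feasible a -> harvest Pr h Pt a = (ha a)%:E.
Proof. by move=> ba; rewrite /harvest (RIE Pr) //; exact: int_hv. Qed.

Lemma lag_E l a : box_feasible a ->
  lagrangian Pr h Pt s2 Qbar l a = (ra a + l * (ha a - Qbar))%:E.
Proof.
by move=> ba; rewrite /lagrangian rate_E // harv_E // -EFinB -EFinM -EFinD.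
Qed.

Lemma int_Zhv (l : R) a : box_feasible a ->
  Pr.-integrable setT (fun x => (l * hvf a x)%:E).
Proof.
move=> ba; under eq_fun do rewrite EFinM.
apply: integrableZl => //; exact: int_hv.
Qed.

Lemma lag_max {l b} : 0 <= l -> l * s2 <= 1 -> box_feasible b ->
  ra b + l * ha b <= ra (al l) + l * ha (al l).
Proof.
move=> l0 ls bb.
have ba := box_al l0 ls.
rewrite /ra /ha -!(RI_Z Pr) ?int_hv // -!(RI_D Pr) ?int_ln ?int_Zhv //.
apply: (RI_le Pr).
- under eq_fun do rewrite EFinD EFinM.
  by apply: integrableD => //; [exact: int_ln| apply: integrableZl => //; exact: int_hv].
- under eq_fun do rewrite EFinD EFinM.
  by apply: integrableD => //; [exact: int_ln| apply: integrableZl => //; exact: int_hv].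
move=> x; rewrite /lnf /hvf al_AA.
case: bb => _ /(_ x) bx.
exact: AA_max.
Qed.

Lemma g_ge l a : box_feasible a ->
  ((ra a + l * (ha a - Qbar))%:E <= dual_fun Pr h Pt s2 Qbar l)%E.
Proof.
move=> ba; rewrite -lag_E //; apply: ereal_sup_ubound; by exists a.
Qed.

Lemma g_le {l} : 0 <= l -> l * s2 <= 1 ->
  (dual_fun Pr h Pt s2 Qbar l <= (ra (al l) + l * (ha (al l) - Qbar))%:E)%E.
Proof.
move=> l0 ls; apply: ge_ereal_sup => _ [b bb <-].
rewrite lag_E // lee_fin.
have := lag_max l0 ls bb; lra.
Qed.

Lemma dual_cond {lam l} : dual_optimal Pr h Pt s2 Qbar lam ->
  0 <= l -> l * s2 <= 1 -> (lam - l) * (ha (al l) - Qbar) <= 0.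
Proof.
move=> [lam0 lamo] l0 ls.
have h1 := @g_ge lam _ (box_al l0 ls).
have h2 := lamo l l0.
have h3 := g_le l0 ls.
have := le_trans h1 (le_trans h2 h3); rewrite lee_fin.
lra.
Qed.


Lemma hv_min l x : 0 < l -> l * s2 <= 1 ->
  hvf (al l) x = h x * Pt - Num.min (h x * Pt) (l^-1 - s2).
Proof.
move=> l0 ls; rewrite /hvf al_AA -AA_min //; ring.
Qed.

Lemma int_hP : Pr.-integrable setT (fun x => (h x * Pt)%:E).
Proof.
apply: (dom_int Pr h h_int _ Pt) => //.
- apply: measurable_realfun.measurable_funM => //; exact: measurable_cst.
- move=> x; rewrite ger0_norm ?mulr_ge0 ?(ltW Pt_gt0) // mulrC.
  exact: lexx.
Qed.

Lemma ha_top : ha (al s2^-1) = RI Pr (fun x => h x * Pt).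
Proof.
rewrite /ha; congr RI; apply: funext => x.
rewrite hv_min ?invr_gt0 ?mulVf ?gt_eqF // invrK subrr.
have u0 : 0 <= h x * Pt by rewrite mulr_ge0 // ltW.
rewrite /Num.min; case: ifPn => hu; first by rewrite subrr; lra.
by rewrite subr0.
Qed.

Lemma ha_lip {l1 l2} : 0 < l1 -> l1 <= l2 -> l2 * s2 <= 1 ->
  ha (al l2) <= ha (al l1) + (l1^-1 - l2^-1).
Proof.
move=> l10 l12 ls.
have l20 : 0 < l2 by apply: lt_le_trans l12.
have ls1 : l1 * s2 <= 1 by apply: le_trans ls; rewrite ler_pM2r.
rewrite /ha -(RI_cst Pr (l1^-1 - l2^-1)) -(RI_D Pr) ?int_hv ?int_cst //;
  try by apply: box_al => //; exact: ltW.
apply: (RI_le Pr); first by apply: int_hv; apply: box_al => //; exact: ltW.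
- under eq_fun do rewrite EFinD.
  apply: integrableD => //; last exact: int_cst.
  by apply: int_hv; apply: box_al => //; exact: ltW.
move=> x; rewrite /hvf !al_AA.
have := @AA_lip _ Pt s2 Pt_gt0 s2_gt0 l1 l2 (h x) l10 l12 ls (h_ge0 x).
lra.
Qed.

Lemma lam_le {lam} : dual_optimal Pr h Pt s2 Qbar lam ->
  (Qbar%:E < \int[Pr]_x (h x * Pt)%:E)%E -> lam * s2 <= 1.
Proof.
move=> lo Qlt.
have hs : 0 <= s2^-1 by rewrite invr_ge0 ltW.
have hs1 : s2^-1 * s2 <= 1 by rewrite mulVf ?gt_eqF.
have := dual_cond lo hs hs1; rewrite ha_top.
rewrite (RIE Pr) ?int_hP // lte_fin in Qlt.
move=> H; rewrite leNgt; apply/negP => Hl.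
have : s2^-1 < lam.
  by rewrite -(ltr_pM2r s2_gt0) mulVf ?gt_eqF.
nra.
Qed.


Lemma tail0 : dual_optimal Pr h Pt s2 Qbar 0 -> Qbar <= 0.
Proof.
move=> lo.
pose ln_ (n : nat) : R := (n%:R + s2)^-1.
have lnp n : 0 < ln_ n by rewrite invr_gt0 ltr_wpDl.
have lns n : ln_ n * s2 <= 1.
  rewrite /ln_ -(ler_pM2l (ltr_wpDl (ler0n _ n) s2_gt0)) mulrA mulfV;
    last by rewrite gt_eqF // ltr_wpDl.
  by rewrite mul1r mulr1 lerDr.
have Hn n : Qbar <= ha (al (ln_ n)).
  have := dual_cond lo (ltW (lnp n)) (lns n).
  have := lnp n; nra.
pose F n x := (hvf (al (ln_ n)) x)%:E.
have Fint n : Pr.-integrable setT (F n).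
  by apply: int_hv; apply: box_al => //; exact: ltW.
have Fmin n x : hvf (al (ln_ n)) x = h x * Pt - Num.min (h x * Pt) n%:R.
  by rewrite hv_min // /ln_ invrK addrK.
have m0 : measurable_fun [set: T] (cst 0 : T -> \bar R)%E by exact: measurable_cst.
have cvx : \forall x \ae Pr, setT x -> (F n x @[n --> \oo] --> (cst 0%E : T -> \bar R) x)%classic.
  apply: aeW => x _; apply: cvg_near_cst.
  near=> n; rewrite /F Fmin.
  have : h x * Pt <= n%:R by near: n; exact: nbhs_infty_ger.
  move=> hn; suff -> : h x * Pt - Num.min (h x * Pt) n%:R = 0 by [].
  by rewrite /Num.min; case: ifPn => hh; rewrite ?subrr //; rewrite -leNgt in hh; lra.
have bnd : \forall x \ae Pr, forall n, setT x -> (`|F n x| <= (h x * Pt)%:E)%E.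
  apply: aeW => x n _; rewrite /F Fmin abse_EFin lee_fin.
  have u0 : 0 <= h x * Pt by rewrite mulr_ge0 // ltW.
  rewrite /Num.min; case: ifPn => hh.
    by rewrite subrr normr0.
  rewrite -leNgt in hh; rewrite ger0_norm; last by lra.
  have := ler0n R n; lra.
have [_ _ cv] := @dominated_convergence _ _ _ Pr setT measurableT F (cst 0%E)
  (fun x => (h x * Pt)%:E) (fun n => measurable_int _ (Fint n))
  m0 cvx int_hP bnd.
have : (Qbar%:E <= 0)%E.
  rewrite integral0 in cv.
  rewrite -(cvg_lim _ cv); last exact: ereal_hausdorff.
  apply: lime_ge; first by apply/cvg_ex; exists 0%E.
  apply: nearW => n /=.
  rewrite /F (RIE Pr) ?lee_fin; [exact: Hn | exact: Fint].
by rewrite lee_fin.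
Unshelve. all: end_near.
Qed.


Lemma main_sec lam : (Qbar%:E < \int[Pr]_x (h x * Pt)%:E)%E ->
  dual_optimal Pr h Pt s2 Qbar lam -> P1_optimal Pr h Pt s2 Qbar (al lam).
Proof.
move=> Qlt lo.
have [lam0 _] := lo.
have ls := lam_le lo Qlt.
have ba := box_al lam0 ls.
have QH : Qbar < RI Pr (fun x => h x * Pt).
  by rewrite (RIE Pr) ?int_hP // lte_fin in Qlt.
have feas : Qbar <= ha (al lam).
  have [lz|lpos] := eqVneq lam 0.
    rewrite lz in lo *.
    have -> : ha (al 0) = 0.
      rewrite /ha -[RHS](RI_cst Pr 0); congr RI; apply: funext => x.
      by rewrite /hvf al_AA AA0 subrr !mul0r.
    exact: tail0.
  have {}lam0 : 0 < lam by rewrite lt_def lpos.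
  have [le1|lt1] := eqVneq (lam * s2) 1.
    have -> : lam = s2^-1.
      by apply: (mulIf (lt0r_neq0 s2_gt0)); rewrite le1 mulVf ?gt_eqF.
    by rewrite ha_top ltW.
  have {}lt1 : lam * s2 < 1 by rewrite lt_neqAle lt1 ls.
  have kp : s2 < lam^-1.
    by rewrite -(ltr_pM2l lam0) mulfV ?gt_eqF.
  apply/ler_addgt0Pr => eps eps0.
  pose e := Num.min eps ((lam^-1 - s2) / 2).
  have e0 : 0 < e by rewrite lt_min eps0 divr_gt0 // subr_gt0.
  have e_eps : e <= eps by rewrite ge_min lexx.
  have e_k : e <= (lam^-1 - s2) / 2 by rewrite ge_min lexx orbT.
  have m0 : s2 < lam^-1 - e by lra.
  have mp : 0 < lam^-1 - e := lt_trans s2_gt0 m0.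
  pose l := (lam^-1 - e)^-1.
  have l0 : 0 < l by rewrite invr_gt0.
  have ll : l * s2 <= 1.
    by rewrite -(ler_pM2l mp) mulrA mulfV ?gt_eqF // mul1r mulr1 ltW.
  have laml : lam < l.
    rewrite -ltf_pV2 ?posrE // /l invrK; lra.
  have H1 := dual_cond lo (ltW l0) ll.
  have H2 : Qbar <= ha (al l).
    have : 0 < l - lam by rewrite subr_gt0.
    nra.
  have H3 := ha_lip lam0 (ltW laml) ll.
  rewrite /l invrK in H3.
  lra.
have comp : 0 < lam -> ha (al lam) <= Qbar.
  move=> lam0'.
  apply/ler_addgt0Pr => eps eps0.
  have mp : 0 < lam^-1 + eps by rewrite addr_gt0 // invr_gt0.
  pose l := (lam^-1 + eps)^-1.
  have l0 : 0 < l by rewrite invr_gt0.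
  have laml : l < lam.
    rewrite -ltf_pV2 ?posrE // /l invrK; lra.
  have ll : l * s2 <= 1.
    by apply: le_trans ls; rewrite ler_pM2r // ltW.
  have H1 := dual_cond lo (ltW l0) ll.
  have H2 : ha (al l) <= Qbar.
    have : 0 < lam - l by rewrite subr_gt0.
    nra.
  have H3 := ha_lip l0 (ltW laml) ls.
  rewrite /l invrK in H3.
  lra.
split.
  split => //; rewrite harv_E // lee_fin //.
move=> b [bb Hb].
rewrite harv_E // lee_fin in Hb.
rewrite !rate_E // lee_fin.
have := lag_max lam0 ls bb.
have : lam * ha (al lam) <= lam * ha b.
  have [lz|lpos] := eqVneq lam 0; first by rewrite lz !mul0r.
  have lam0' : 0 < lam by rewrite lt_def lpos.
  apply: ler_wpM2l => //.
  exact: le_trans (comp lam0') Hb.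
lra.
Qed.

End Main.

Local Open Scope classical_set_scope.

Theorem proposition4p1 (d : measure_display) (T : measurableType d)
  (R : realType) (Pr : probability T R) (h : T -> R) (Pt s2 Qbar lam : R)
  (h_meas : measurable_fun setT h)
  (h_ge0 : forall x, 0 <= h x)
  (h_int : Pr.-integrable setT (fun x => (h x)%:E))
  (h_pdf : exists f : R -> R,
      measurable_fun setT f /\ (forall r, 0 <= f r) /\
      (forall A, measurable A ->
         Pr (h @^-1` A) = (\int[@lebesgue_measure R]_(r in A) (f r)%:E)%E))
  (Pt_gt0 : 0 < Pt) (s2_gt0 : 0 < s2)
  (Qbar_ge0 : 0 <= Qbar)
  (Qbar_lt : (Qbar%:E < \int[Pr]_x (h x * Pt)%:E)%E)
  (lam_opt : dual_optimal Pr h Pt s2 Qbar lam) :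
  P1_optimal Pr h Pt s2 Qbar (alpha_star h Pt s2 lam).
Proof.
exact: (main_sec Pr h Pt s2 Qbar h_meas h_ge0 h_int Pt_gt0 s2_gt0 lam Qbar_lt lam_opt).
Qed.
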